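(* Assume $\gamma_0$ is unimodal (and symmetric about $0$) with $\sup_u|\frac{d}{du}\log\gamma_0(u)|\le\Lambda$ a.e. and $\sup_u|\frac{d^2}{du^2}\log\gamma_0(u)|\le\Lambda'$ a.e. for some $\Lambda,\Lambda'>0$. Then there is a constant $C>0$ depending only on $\gamma_0$ such that for all $x\in\mathbb{R}$, $w\in(0,1]$, $c\in\mathbb{R}$, $$\left|\frac{d}{dx}\zeta(x;\theta)\right|\le C\bigl(1+|c|+\log(1/w)\bigr).$$ The same conclusion holds when $\gamma_0$ is the double exponential density $\gamma_0(u)=\frac{\Lambda}{2}e^{-\Lambda|u|}$.
   Context: Let $\phi$ be the standard normal density and $\gamma_0$ a probability density on $\mathbb{R}$. For $\theta=(w,c)$, $w\in(0,1]$, $c\in\mathbb{R}$, let $g(x;c)=\int\phi(x-\mu)\gamma_0(\mu-c)\,d\mu$, $m(x;\theta)=(1-w)\phi(x)+wg(x;c)$, and $\zeta(x;\theta)=x+\frac{d}{dx}\log m(x;\theta)$ (the posterior mean of $\mu$ given $X=x$ under $X\mid\mu\sim N(\mu,1)$ and prior $(1-w)\delta_0+w\gamma_0(\cdot-c)$). *)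

(* Defs.v *)
From Stdlib Require Import Reals Lra ClassicalEpsilon.
Open Scope R_scope.

Definition phi (x : R) : R := exp (- (x ^ 2) / 2) / sqrt (2 * PI).

Definition improper_integral_of (f : R -> R) (l : R) : Prop :=
  (forall a b, a <= b -> inhabited (Riemann_integrable f a b)) /\
  (forall eps, 0 < eps -> exists M, forall a b (pr : Riemann_integrable f a b),
      a < - M -> M < b -> Rabs (RiemannInt pr - l) < eps).

(* The value of the integral (chosen by classical choice; determined
   uniquely whenever the integral exists). *)
Definition Integral (f : R -> R) : R :=
  epsilon (inhabits 0) (fun l => improper_integral_of f l).

Definition deriv (f : R -> R) (x : R) : R :=
  epsilon (inhabits 0) (fun d => derivable_pt_lim f x d).

Definition gconv (gamma0 : R -> R) (c x : R) : R :=
  Integral (fun mu => phi (x - mu) * gamma0 (mu - c)).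

Definition marg (gamma0 : R -> R) (w c x : R) : R :=
  (1 - w) * phi x + w * gconv gamma0 c x.

Definition zeta (gamma0 : R -> R) (w c x : R) : R :=
  x + deriv (fun y => ln (marg gamma0 w c y)) x.

Definition is_density (gamma0 : R -> R) : Prop :=
  (forall u, 0 <= gamma0 u) /\ improper_integral_of gamma0 1.

Definition symmetric_unimodal (gamma0 : R -> R) : Prop :=
  (forall u, gamma0 (- u) = gamma0 u) /\
  (forall u v, 0 <= u -> u <= v -> gamma0 v <= gamma0 u).

(* Regularity hypothesis of the first case: log gamma0 is differentiable
   with derivative l' satisfying |l'| <= Lam and |l''| <= Lam' a.e.,
   rendered as: l' is Lam'-Lipschitz. *)
Definition log_regular (gamma0 : R -> R) (Lam Lam' : R) : Prop :=
  (forall u, 0 < gamma0 u) /\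
  exists l' : R -> R,
    (forall u, derivable_pt_lim (fun v => ln (gamma0 v)) u (l' u)) /\
    (forall u, Rabs (l' u) <= Lam) /\
    (forall u v, Rabs (l' u - l' v) <= Lam' * Rabs (u - v)).

Definition laplace (Lam : R) (u : R) : R := Lam / 2 * exp (- Lam * Rabs u).

(* Main.v *)
Require Import Defs.
From Coquelicot Require Import Coquelicot.
From Stdlib Require Import Reals Lra ClassicalEpsilon FunctionalExtensionality.
Open Scope R_scope.

Definition cont (f : R -> R) := forall x, continuity_pt f x.
Definition II (f : R -> R) (l : R) := cont f /\
  forall eps, 0 < eps -> exists M, forall a b, a < - M -> M < b ->
    Rabs (RInt f a b - l) < eps.

Lemma exRI f a b : cont f -> ex_RInt f a b.
Proof. intros H; apply (@ex_RInt_continuous R_CompleteNormedModule); intros z _; apply continuity_pt_filterlim, H. Qed.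

Lemma RI_plus f g a b : cont f -> cont g ->
  RInt (fun x => f x + g x) a b = RInt f a b + RInt g a b.
Proof. intros Hf Hg. exact (RInt_plus f g a b (exRI f a b Hf) (exRI g a b Hg)). Qed.

Lemma RI_scal f k a b : cont f -> RInt (fun x => k * f x) a b = k * RInt f a b.
Proof. intros Hf. exact (RInt_scal f a b k (exRI f a b Hf)). Qed.

Lemma RI_le f g a b : a <= b -> cont f -> cont g -> (forall x, f x <= g x) ->
  RInt f a b <= RInt g a b.
Proof. intros. apply RInt_le; auto using exRI. Qed.

Lemma RI_ge0 f a b : a <= b -> cont f -> (forall x, 0 <= f x) -> 0 <= RInt f a b.
Proof. intros. apply RInt_ge_0; auto using exRI. Qed.

Lemma RI_chasles f a b c : cont f -> RInt f a b + RInt f b c = RInt f a c.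
Proof. intros. exact (RInt_Chasles f a b c (exRI _ _ _ H) (exRI _ _ _ H)). Qed.

Lemma RI_const k a b : RInt (fun _ => k) a b = (b - a) * k.
Proof. rewrite RInt_const. reflexivity. Qed.

Lemma II_to f l : II f l -> improper_integral_of f l.
Proof.
  intros [Hc H]. split.
  - intros a b _. constructor. apply ex_RInt_Reals_0, exRI, Hc.
  - intros eps He. destruct (H eps He) as [M HM]. exists M. intros a b pr Ha Hb.
    rewrite <- RInt_Reals. auto.
Qed.

Lemma II_uniq f l1 l2 : improper_integral_of f l1 -> II f l2 -> l1 = l2.
Proof.
  intros [Hi1 H1] [Hc H2].
  destruct (Req_dec l1 l2) as [e|ne]; auto. exfalso.
  assert (Hep : 0 < Rabs (l1 - l2) / 2).
  { assert (0 < Rabs (l1 - l2)) by (apply Rabs_pos_lt; lra). lra. }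
  destruct (H1 _ Hep) as [M1 HM1]. destruct (H2 _ Hep) as [M2 HM2].
  set (M := Rabs M1 + Rabs M2 + 1).
  assert (Hab : - M <= M) by (unfold M; pose proof (Rabs_pos M1); pose proof (Rabs_pos M2); lra).
  destruct (Hi1 _ _ Hab) as [pr].
  assert (HA := HM1 (-M - 1) (M + 1)).
  specialize (HM2 (-M-1) (M+1)).
  pose proof (Rle_abs M1); pose proof (Rle_abs M2).
  pose proof (Rle_abs (-M1)); pose proof (Rle_abs (-M2)). rewrite Rabs_Ropp in *.
  assert (pr' : Riemann_integrable f (-M-1) (M+1)) by (apply ex_RInt_Reals_0, exRI, Hc).
  specialize (HA pr'). rewrite <- RInt_Reals in HA.
  assert (A1 : Rabs (RInt f (-M-1) (M+1) - l1) < Rabs (l1 - l2) / 2) by (apply HA; unfold M; lra).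
  assert (A2 : Rabs (RInt f (-M-1) (M+1) - l2) < Rabs (l1 - l2) / 2) by (apply HM2; unfold M; lra).
  assert (Rabs (l1 - l2) <= Rabs (RInt f (-M-1) (M+1) - l1) + Rabs (RInt f (-M-1) (M+1) - l2)).
  { replace (l1 - l2) with (-(RInt f (-M-1) (M+1) - l1) + (RInt f (-M-1) (M+1) - l2)) by ring.
    eapply Rle_trans. apply Rabs_triang. rewrite Rabs_Ropp. lra. }
  lra.
Qed.

Lemma Integral_II f l : II f l -> Integral f = l.
Proof.
  intros H. unfold Integral.
  apply (II_uniq f). 2: exact H.
  apply epsilon_spec. exists l. apply II_to, H.
Qed.

Lemma cont_plus f g : cont f -> cont g -> cont (fun x => f x + g x).
Proof. intros Hf Hg x. apply continuity_pt_plus; auto. Qed.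
Lemma cont_mult f g : cont f -> cont g -> cont (fun x => f x * g x).
Proof. intros Hf Hg x. apply continuity_pt_mult; auto. Qed.
Lemma cont_const k : cont (fun _ => k).
Proof. intros x. apply continuity_pt_const. intros ? ?; reflexivity. Qed.
Lemma cont_scal k f : cont f -> cont (fun x => k * f x).
Proof. intros; apply cont_mult; auto using cont_const. Qed.

Lemma II_plus f g l1 l2 : II f l1 -> II g l2 -> II (fun x => f x + g x) (l1 + l2).
Proof.
  intros [Hf H1] [Hg H2]. split. apply cont_plus; auto.
  intros eps He. destruct (H1 (eps/2)) as [M1 HM1]. lra. destruct (H2 (eps/2)) as [M2 HM2]. lra.
  exists (Rabs M1 + Rabs M2). intros a b Ha Hb.
  pose proof (Rle_abs M1); pose proof (Rle_abs M2); pose proof (Rabs_pos M1); pose proof (Rabs_pos M2).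
  rewrite RI_plus by auto.
  specialize (HM1 a b ltac:(lra) ltac:(lra)). specialize (HM2 a b ltac:(lra) ltac:(lra)).
  replace (RInt f a b + RInt g a b - (l1 + l2)) with ((RInt f a b - l1) + (RInt g a b - l2)) by ring.
  eapply Rle_lt_trans. apply Rabs_triang. lra.
Qed.

Lemma II_scal k f l : II f l -> II (fun x => k * f x) (k * l).
Proof.
  intros [Hf H1]. split. apply cont_scal; auto.
  intros eps He. destruct (H1 (eps / (Rabs k + 1))) as [M HM].
  { apply Rdiv_lt_0_compat; auto. pose proof (Rabs_pos k); lra. }
  exists M. intros a b Ha Hb. rewrite RI_scal by auto.
  replace (k * RInt f a b - k * l) with (k * (RInt f a b - l)) by ring.
  rewrite Rabs_mult. specialize (HM a b Ha Hb).
  pose proof (Rabs_pos k). pose proof (Rabs_pos (RInt f a b - l)).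
  apply Rle_lt_trans with ((Rabs k + 1) * Rabs (RInt f a b - l)). nra.
  apply Rmult_lt_compat_l with (r := Rabs k + 1) in HM. 2: lra.
  replace ((Rabs k + 1) * (eps / (Rabs k + 1))) with eps in HM by (field; lra). lra.
Qed.

Lemma II_ext f g l : (forall x, f x = g x) -> II f l -> II g l.
Proof. intros H. replace g with f; auto. apply functional_extensionality; auto. Qed.

Lemma II_le f l B : II f l -> (exists M0, forall a b, a < -M0 -> M0 < b -> RInt f a b <= B) -> l <= B.
Proof.
  intros [Hf H] [M0 HM0]. destruct (Rle_lt_dec l B) as [h|h]; auto. exfalso.
  destruct (H (l - B)) as [M HM]. lra.
  set (N := Rabs M + Rabs M0 + 1). pose proof (Rle_abs M); pose proof (Rle_abs M0).
  pose proof (Rabs_pos M); pose proof (Rabs_pos M0).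
  specialize (HM (-N) N ltac:(unfold N; lra) ltac:(unfold N; lra)).
  specialize (HM0 (-N) N ltac:(unfold N; lra) ltac:(unfold N; lra)).
  apply Rabs_def2 in HM. lra.
Qed.

Lemma II_ge f l B : II f l -> (exists M0, forall a b, a < -M0 -> M0 < b -> B <= RInt f a b) -> B <= l.
Proof.
  intros [Hf H] [M0 HM0]. destruct (Rle_lt_dec B l) as [h|h]; auto. exfalso.
  destruct (H (B - l)) as [M HM]. lra.
  set (N := Rabs M + Rabs M0 + 1). pose proof (Rle_abs M); pose proof (Rle_abs M0).
  pose proof (Rabs_pos M); pose proof (Rabs_pos M0).
  specialize (HM (-N) N ltac:(unfold N; lra) ltac:(unfold N; lra)).
  specialize (HM0 (-N) N ltac:(unfold N; lra) ltac:(unfold N; lra)).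
  apply Rabs_def2 in HM. lra.
Qed.

Lemma II_lower f l a0 b0 : II f l -> (forall x, 0 <= f x) -> a0 <= b0 -> RInt f a0 b0 <= l.
Proof.
  intros HI Hp Hab. pose proof HI as [Hf _]. apply II_ge with f; auto.
  exists (Rabs a0 + Rabs b0). intros a b Ha Hb.
  pose proof (Rle_abs a0); pose proof (Rle_abs b0); pose proof (Rle_abs (-a0)); pose proof (Rle_abs (-b0)).
  rewrite Rabs_Ropp in *.
  rewrite <- (RI_chasles f a a0 b) by auto. rewrite <- (RI_chasles f a0 b0 b) by auto.
  assert (0 <= RInt f a a0) by (apply RI_ge0; auto; lra).
  assert (0 <= RInt f b0 b) by (apply RI_ge0; auto; lra). lra.
Qed.

Lemma II_mono f g l1 l2 : II f l1 -> II g l2 -> (forall x, f x <= g x) -> l1 <= l2.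
Proof.
  intros H1 H2 Hle.
  assert (H3 : II (fun x => g x + (-1) * f x) (l2 + (-1) * l1)) by (apply II_plus; auto; apply II_scal; auto).
  assert (0 <= l2 + (-1) * l1); [|lra].
  apply II_ge with (1 := H3). exists 0. intros a b Ha Hb.
  apply RI_ge0. lra. apply H3. intros x; specialize (Hle x); lra.
Qed.

Lemma II_exists_sup f B : cont f -> (forall x, 0 <= f x) ->
  (forall a b, a <= b -> RInt f a b <= B) -> exists l, II f l.
Proof.
  intros Hf Hp HB.
  set (E := fun y => exists a b, a <= b /\ y = RInt f a b).
  assert (Hbd : bound E). { exists B. intros y [a [b [h ->]]]. auto. }
  assert (Hne : exists y, E y). { exists (RInt f 0 0). exists 0, 0. split; auto; lra. }
  destruct (completeness E Hbd Hne) as [l [Hub Hlub]].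
  exists l. split; auto. intros eps He.
  assert (Hex : exists a0 b0, a0 <= b0 /\ l - eps < RInt f a0 b0).
  { apply NNPP. intros Hn. assert (l <= l - eps); [|lra].
    apply Hlub. intros y [a [b [h ->]]]. apply Rnot_lt_le. intros Hl. apply Hn. exists a, b. auto. }
  destruct Hex as [a0 [b0 [Hab Hl]]].
  exists (Rabs a0 + Rabs b0). intros a b Ha Hb.
  pose proof (Rle_abs a0); pose proof (Rle_abs b0); pose proof (Rle_abs (-a0)); pose proof (Rle_abs (-b0)).
  rewrite Rabs_Ropp in *.
  assert (U : RInt f a b <= l) by (apply Hub; exists a, b; split; auto; lra).
  assert (Lo : RInt f a0 b0 <= RInt f a b).
  { rewrite <- (RI_chasles f a a0 b) by auto. rewrite <- (RI_chasles f a0 b0 b) by auto.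
    assert (0 <= RInt f a a0) by (apply RI_ge0; auto; lra).
    assert (0 <= RInt f b0 b) by (apply RI_ge0; auto; lra). lra. }
  apply Rabs_def1; lra.
Qed.

Lemma Rabs_def2b a b : Rabs a <= b -> - b <= a /\ a <= b.
Proof. intros H. pose proof (Rle_abs a). pose proof (Rle_abs (-a)). rewrite Rabs_Ropp in *. lra. Qed.

Definition Dm (x0 mu : R) := / (1 + (mu - x0) ^ 2).

Lemma Dm_pos x0 mu : 0 < Dm x0 mu.
Proof. unfold Dm. apply Rinv_0_lt_compat. pose proof (pow2_ge_0 (mu - x0)). lra. Qed.

Lemma cont_Dm x0 : cont (Dm x0).
Proof.
  intros x. unfold Dm. apply continuity_pt_inv.
  reg. pose proof (pow2_ge_0 (x - x0)). lra.
Qed.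

Lemma RInt_Dm x0 a b : RInt (Dm x0) a b = atan (b - x0) - atan (a - x0).
Proof.
  apply is_RInt_unique.
  apply (is_RInt_derive (fun mu => atan (mu - x0)) (Dm x0)).
  - intros x _. apply is_derive_Reals.
    replace (Dm x0 x) with (/ (1 + (x - x0)^2) * (1 - 0)) by (unfold Dm; ring).
    apply (derivable_pt_lim_comp (fun mu => mu - x0) atan).
    apply derivable_pt_lim_minus. apply derivable_pt_lim_id. apply derivable_pt_lim_const.
    apply derivable_pt_lim_atan.
  - intros x _. apply continuity_pt_filterlim, cont_Dm.
Qed.

Lemma RInt_Dm_le x0 a b : a <= b -> RInt (Dm x0) a b <= PI.
Proof. intros. rewrite RInt_Dm. pose proof (atan_bound (b-x0)); pose proof (atan_bound (a-x0)). lra. Qed.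

Lemma II_dom f K x0 : cont f -> 0 <= K -> (forall mu, Rabs (f mu) <= K * Dm x0 mu) ->
  exists l, II f l /\ Rabs l <= K * PI.
Proof.
  intros Hf HK Hd.
  assert (HcD : cont (fun mu => K * Dm x0 mu)) by (apply cont_scal, cont_Dm).
  assert (RD : forall a b, a <= b -> RInt (fun mu => K * Dm x0 mu) a b <= K * PI).
  { intros a b h. rewrite RI_scal by apply cont_Dm. apply Rmult_le_compat_l; auto. apply RInt_Dm_le; auto. }
  destruct (II_exists_sup (fun mu => K * Dm x0 mu) (K * PI)) as [lh Hh]; auto.
  { intros x. pose proof (Dm_pos x0 x). nra. }
  destruct (II_exists_sup (fun mu => f mu + K * Dm x0 mu) (2 * (K * PI))) as [lg Hg].
  { apply cont_plus; auto. }
  { intros x. specialize (Hd x). apply Rabs_def2b in Hd. lra. }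
  { intros a b h. rewrite RI_plus by auto.
    assert (RInt f a b <= RInt (fun mu => K * Dm x0 mu) a b).
    { apply RI_le; auto. intros x. specialize (Hd x). apply Rabs_def2b in Hd. lra. }
    specialize (RD a b h). lra. }
  assert (HI : II f (lg + (-1) * lh)).
  { apply II_ext with (fun x => (f x + K * Dm x0 x) + (-1) * (K * Dm x0 x)).
    intros; ring. apply II_plus; auto. apply II_scal; auto. }
  exists (lg + (-1) * lh). split; auto.
  apply Rabs_le. split.
  - apply II_ge with f; auto. exists 0. intros a b Ha Hb.
    assert (RInt (fun mu => (-1) * (K * Dm x0 mu)) a b <= RInt f a b).
    { apply RI_le; auto. lra. apply cont_scal; auto. intros x. specialize (Hd x). apply Rabs_def2b in Hd. lra. }
    rewrite RI_scal in H by auto. specialize (RD a b ltac:(lra)). lra.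
  - apply II_le with f; auto. exists 0. intros a b Ha Hb.
    assert (RInt f a b <= RInt (fun mu => K * Dm x0 mu) a b).
    { apply RI_le; auto. lra. intros x. specialize (Hd x). apply Rabs_def2b in Hd. lra. }
    specialize (RD a b ltac:(lra)). lra.
Qed.

Lemma II_le_dom f l K x0 : II f l -> 0 <= K -> (forall mu, f mu <= K * Dm x0 mu) -> l <= K * PI.
Proof.
  intros HI HK Hd. apply II_le with f; auto. exists 0. intros a b Ha Hb.
  apply Rle_trans with (RInt (fun mu => K * Dm x0 mu) a b).
  apply RI_le; auto. lra. apply HI. apply cont_scal, cont_Dm.
  rewrite RI_scal by apply cont_Dm. apply Rmult_le_compat_l; auto. apply RInt_Dm_le; lra.
Qed.

Lemma II_deriv (F F1 : R -> R -> R) (I I1 : R -> R) K x :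
  (forall y, II (F y) (I y)) -> II (F1 x) (I1 x) -> 0 <= K ->
  (forall h mu, Rabs h <= 1 -> Rabs (F (x+h) mu - F x mu - h * F1 x mu) <= K * h^2 * Dm x mu) ->
  derivable_pt_lim I x (I1 x).
Proof.
  intros HF HF1 HK Hb.
  assert (Hv : forall h, Rabs h <= 1 -> Rabs (I (x+h) - I x - h * I1 x) <= K * h^2 * PI).
  { intros h hh.
    assert (HI : II (fun mu => F (x+h) mu + (-1) * F x mu + (-h) * F1 x mu)
                    (I (x+h) + (-1) * I x + (-h) * I1 x)).
    { apply II_plus. apply II_plus. auto. apply II_scal; auto. apply II_scal; auto. }
    apply Rabs_le. split.
    - assert (HI' := II_scal (-1) _ _ HI).
      assert (-1 * (I (x + h) + -1 * I x + - h * I1 x) <= K * h^2 * PI); [|lra].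
      apply (II_le_dom _ _ _ x HI'). pose proof (pow2_ge_0 h); nra.
      intros mu. specialize (Hb h mu hh). apply Rabs_def2b in Hb. lra.
    - assert ((I (x + h) + -1 * I x + - h * I1 x) <= K * h^2 * PI); [|lra].
      apply (II_le_dom _ _ _ x HI). pose proof (pow2_ge_0 h); nra.
      intros mu. specialize (Hb h mu hh). apply Rabs_def2b in Hb. lra. }
  intros eps He.
  assert (HP : 0 < K * PI + 1) by (pose proof PI_RGT_0; nra).
  assert (Hd : 0 < Rmin 1 (eps / (K * PI + 1))).
  { apply Rmin_pos. lra. apply Rdiv_lt_0_compat; lra. }
  exists (mkposreal _ Hd). intros h hn hh. simpl in hh.
  assert (h1 : Rabs h <= 1) by (pose proof (Rmin_l 1 (eps / (K * PI + 1))); lra).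
  assert (h2 : Rabs h < eps / (K * PI + 1)) by (pose proof (Rmin_r 1 (eps / (K * PI + 1))); lra).
  specialize (Hv h h1).
  replace ((I (x + h) - I x) / h - I1 x) with ((I (x + h) - I x - h * I1 x) / h) by (field; auto).
  unfold Rdiv. rewrite Rabs_mult, Rabs_inv.
  assert (ha : 0 < Rabs h) by (apply Rabs_pos_lt; auto).
  apply Rmult_lt_reg_r with (Rabs h). auto.
  rewrite Rmult_assoc, Rinv_l by lra. rewrite Rmult_1_r.
  apply Rle_lt_trans with (K * h^2 * PI). auto.
  replace (h^2) with (Rabs h * Rabs h) by (rewrite <- Rabs_mult; simpl; rewrite Rmult_1_r; apply Rabs_right; nra).
  apply Rmult_lt_compat_r with (r := K * PI + 1) in h2; auto.
  replace (eps / (K * PI + 1) * (K * PI + 1)) with eps in h2 by (field; lra).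
  pose proof PI_RGT_0. nra.
Qed.

Lemma sqrt2PI_ge1 : 1 <= sqrt (2 * PI).
Proof. rewrite <- sqrt_1. apply sqrt_le_1_alt. pose proof PI2_1. lra. Qed.

Lemma phi_pos t : 0 < phi t.
Proof. unfold phi. apply Rdiv_lt_0_compat. apply exp_pos. pose proof sqrt2PI_ge1; lra. Qed.

Lemma phi_le t : phi t <= exp (- (t^2) / 2).
Proof.
  unfold phi. pose proof sqrt2PI_ge1. pose proof (exp_pos (- (t^2)/2)).
  apply Rmult_le_reg_r with (sqrt (2 * PI)). lra.
  unfold Rdiv. rewrite Rmult_assoc, Rinv_l by lra. nra.
Qed.

Lemma phi_sym x mu : phi (x - mu) = phi (mu - x).
Proof. unfold phi. f_equal. f_equal. f_equal. ring. Qed.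

Lemma phi_deriv t : derivable_pt_lim phi t (- t * phi t).
Proof.
  apply is_derive_Reals. unfold phi. auto_derive; auto. replace (- (t * (t * 1)) * / 2) with (- t^2/2) by field. field.
  pose proof sqrt2PI_ge1; lra.
Qed.

Lemma cont_phi : cont phi.
Proof. intros t. apply derivable_continuous_pt. exists (- t * phi t). apply phi_deriv. Qed.

Lemma exp_quarter t : (1 + t^2)^4 * exp (- (t^2) / 4) <= 16^4.
Proof.
  assert (E : exp (t^2/4) = exp (t^2/16) ^ 4).
  { replace (exp (t^2/16) ^ 4) with (exp (t^2/16) * exp (t^2/16) * exp (t^2/16) * exp (t^2/16)) by ring.
    rewrite <- !exp_plus. f_equal. field. }
  pose proof (exp_ineq1_le (t^2/16)) as H1.
  assert (H2 : (1 + t^2) / 16 <= exp (t^2 / 16)) by (pose proof (pow2_ge_0 t); lra).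
  assert (H3 : ((1 + t^2)/16)^4 <= exp (t^2/4)).
  { rewrite E. apply pow_incr. split; auto. pose proof (pow2_ge_0 t); lra. }
  assert (H4 : exp (- (t^2)/4) * exp (t^2/4) = 1).
  { rewrite <- exp_plus. replace (- (t^2)/4 + t^2/4) with 0 by field. apply exp_0. }
  pose proof (exp_pos (- (t^2)/4)).
  assert (H5 : (1 + t^2)^4 <= 16^4 * exp (t^2/4)).
  { replace ((1+t^2)^4) with (16^4 * ((1+t^2)/16)^4) by field. apply Rmult_le_compat_l. lra. auto. }
  apply Rmult_le_compat_r with (r := exp (- (t^2)/4)) in H5. 2: lra.
  rewrite Rmult_assoc, (Rmult_comm (exp (t^2/4))), H4 in H5. lra.
Qed.

Lemma exp_mono a b : a <= b -> exp a <= exp b.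
Proof. intros H. destruct (Req_dec a b). subst; lra. left. apply exp_increasing. lra. Qed.

Lemma phi_quarter t : phi t <= exp (- (t^2)/4).
Proof. eapply Rle_trans. apply phi_le. apply exp_mono. pose proof (pow2_ge_0 t). lra. Qed.

Lemma phi_poly t : (1 + t^2)^3 * phi t <= 16^4 * / (1 + t^2).
Proof.
  pose proof (exp_quarter t). pose proof (phi_quarter t). pose proof (phi_pos t).
  assert (P : 0 < 1 + t^2) by (pose proof (pow2_ge_0 t); lra).
  apply Rmult_le_reg_r with (1 + t^2). auto.
  replace (16^4 * /(1+t^2) * (1+t^2)) with (16^4) by (field; lra).
  assert (0 < (1+t^2)^3) by (apply pow_lt; auto).
  replace ((1 + t ^ 2) ^ 3 * phi t * (1 + t ^ 2)) with ((1 + t^2)^4 * phi t) by ring.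
  assert ((1+t^2)^4 * phi t <= (1+t^2)^4 * exp (- (t^2)/4)).
  { apply Rmult_le_compat_l; auto. apply pow_le. lra. }
  lra.
Qed.

Lemma Dm0 x mu : Dm x mu = / (1 + (mu - x)^2).
Proof. reflexivity. Qed.

Lemma poly_phi_bound (P : R) t c : 0 <= c -> Rabs P <= c * (1 + t^2)^3 ->
  Rabs (P * phi t) <= c * 16^4 * / (1 + t^2).
Proof.
  intros Hc HP. rewrite Rabs_mult, (Rabs_right (phi t)) by (left; apply phi_pos).
  pose proof (phi_poly t). pose proof (phi_pos t).
  apply Rle_trans with (c * (1 + t^2)^3 * phi t). apply Rmult_le_compat_r; lra.
  rewrite Rmult_assoc, (Rmult_assoc c). apply Rmult_le_compat_l; auto.
Qed.

Lemma pow3_bound t : 1 <= (1 + t^2)^3 /\ Rabs t <= (1+t^2)^3 /\ t^2 <= (1+t^2)^3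
  /\ Rabs (t^2 - 1) <= 2 * (1+t^2)^3 /\ Rabs (t^3 - 3 * t) <= 4 * (1 + t^2)^3.
Proof.
  pose proof (pow2_ge_0 t). set (u := 1 + t^2).
  assert (U1 : 1 <= u) by (unfold u; lra).
  assert (U3 : u <= u^3) by (simpl; nra).
  assert (A : Rabs t <= u).
  { unfold u. apply Rabs_le. split; nra. }
  assert (A2 : Rabs t * t^2 <= u^3).
  { pose proof (Rabs_pos t). apply Rle_trans with (u * u).
    apply Rmult_le_compat; auto; unfold u; lra. simpl. nra. }
  repeat split; try lra; try (unfold u in *; lra).
  - apply Rabs_le. unfold u in *; split; lra.
  - apply Rle_trans with (Rabs t * t^2 + 3 * Rabs t).
    replace (t^3 - 3*t) with (t * t^2 + (-3) * t) by ring.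
    eapply Rle_trans. apply Rabs_triang. rewrite !Rabs_mult.
    rewrite (Rabs_right (t^2)) by lra. rewrite (Rabs_left (-3)) by lra. replace (- -3) with 3 by ring. lra.
    lra.
Qed.

Lemma MVT_abs (f f' : R -> R) : (forall s, derivable_pt_lim f s (f' s)) ->
  forall a b, exists xi, Rabs (xi - a) <= Rabs (b - a) /\ f b - f a = f' xi * (b - a).
Proof.
  intros Hd a b. destruct (Rtotal_order a b) as [h|[h|h]].
  - destruct (MVT_cor2 f f' a b h) as [c [E Hc]]. intros; auto.
    exists c. split; auto. rewrite !Rabs_right by lra. lra.
  - subst. exists b. split. right; auto. ring.
  - destruct (MVT_cor2 f f' b a h) as [c [E Hc]]. intros; auto.
    exists c. split. rewrite !Rabs_left by lra. lra. lra.
Qed.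

Lemma taylor2 (p dp ddp : R -> R) K :
  (forall s, derivable_pt_lim p s (dp s)) -> (forall s, derivable_pt_lim dp s (ddp s)) ->
  (forall s, Rabs (ddp s) <= K * / (1 + s^2)) ->
  forall t h, Rabs h <= 1 -> Rabs (p (t - h) - p t + h * dp t) <= 3 * K * h^2 * / (1 + t^2).
Proof.
  intros Hp Hdp Hb t h hh.
  set (r := fun s => p (t - s) - p t + s * dp t).
  assert (Hr : forall s, derivable_pt_lim r s (dp t - dp (t - s))).
  { intros s. unfold r.
    replace (dp t - dp (t - s)) with (dp (t - s) * (0 - 1) - 0 + (1 * dp t + s * 0)) by ring.
    apply derivable_pt_lim_plus. apply derivable_pt_lim_minus.
    apply (derivable_pt_lim_comp (fun s => t - s) p).
    apply derivable_pt_lim_minus. apply derivable_pt_lim_const. apply derivable_pt_lim_id.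
    apply Hp. apply derivable_pt_lim_const.
    apply (derivable_pt_lim_mult (fun s => s) (fun _ => dp t)). apply derivable_pt_lim_id. apply derivable_pt_lim_const. }
  destruct (MVT_abs r _ Hr 0 h) as [c [Hc E]].
  assert (R0 : r 0 = 0) by (unfold r; rewrite Rminus_0_r; ring).
  destruct (MVT_abs dp ddp Hdp t (t - c)) as [xi [Hxi E2]].
  replace (p (t - h) - p t + h * dp t) with (r h) by reflexivity.
  replace (r h) with ((dp t - dp (t - c)) * h) by (rewrite R0, Rminus_0_r in E; lra).
  replace (dp t - dp (t - c)) with (ddp xi * c) by (replace (t - c - t) with (- c) in E2 by ring; lra).
  rewrite !Rminus_0_r in Hc.
  replace (t - c - t) with (- c) in Hxi by ring. rewrite Rabs_Ropp in Hxi.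
  assert (K0 : 0 <= K).
  { specialize (Hb 0). pose proof (Rabs_pos (ddp 0)).
    assert (0 < / (1 + 0^2)) by (apply Rinv_0_lt_compat; simpl; lra). nra. }
  assert (Q : / (1 + xi^2) <= 3 * / (1 + t^2)).
  { pose proof (pow2_ge_0 xi). pose proof (pow2_ge_0 t).
    assert (t^2 <= 2 * xi^2 + 2).
    { assert (Rabs (xi - t) <= 1) by lra. apply Rabs_def2b in H1. pose proof (pow2_ge_0 (xi - (t - xi))). assert ((t - xi)^2 <= 1) by nra. nra. }
    apply Rmult_le_reg_r with ((1 + xi^2) * (1 + t^2)). nra.
    replace (/ (1 + xi ^ 2) * ((1 + xi ^ 2) * (1 + t ^ 2))) with (1 + t^2) by (field; lra).
    replace (3 * / (1 + t ^ 2) * ((1 + xi ^ 2) * (1 + t ^ 2))) with (3 * (1 + xi^2)) by (field; lra).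
    lra. }
  rewrite !Rabs_mult.
  pose proof (Rabs_pos c); pose proof (Rabs_pos h); pose proof (Rabs_pos (ddp xi)).
  assert (h2 : h^2 = Rabs h * Rabs h) by (rewrite <- Rabs_mult; simpl; rewrite Rmult_1_r; symmetry; apply Rabs_right; nra).
  rewrite h2.
  assert (Rabs (ddp xi) <= 3 * K * / (1 + t^2)).
  { eapply Rle_trans. apply Hb. replace (3 * K * / (1 + t^2)) with (K * (3 * / (1+t^2))) by ring.
    apply Rmult_le_compat_l; auto. }
  assert (Rabs c * Rabs h <= Rabs h * Rabs h) by (apply Rmult_le_compat_r; lra).
  assert (0 <= 3 * K * / (1 + t^2)) by (pose proof (Rabs_pos (ddp xi)); lra).
  replace (3 * K * (Rabs h * Rabs h) * / (1 + t ^ 2)) with (3 * K * / (1 + t^2) * (Rabs h * Rabs h)) by ring.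
  apply Rle_trans with (3 * K * / (1 + t ^ 2) * (Rabs c * Rabs h)).
  rewrite Rmult_assoc. apply Rmult_le_compat_r. nra. auto.
  apply Rmult_le_compat_l; auto.
Qed.

Definition ps0 t := phi t.
Definition ps1 t := t * phi t.
Definition ps2 t := t^2 * phi t.

Lemma fix_exp t : - (t * (t * 1)) * / 2 = - t^2/2.
Proof. field. Qed.

Lemma d_ps0 t : derivable_pt_lim ps0 t (- ps1 t).
Proof. unfold ps0, ps1. replace (- (t * phi t)) with (- t * phi t) by ring. apply phi_deriv. Qed.

Lemma d_ps1 t : derivable_pt_lim ps1 t (ps0 t - ps2 t).
Proof.
  unfold ps0, ps1, ps2. apply is_derive_Reals. unfold phi. auto_derive; auto.
  rewrite fix_exp. field. pose proof sqrt2PI_ge1; lra.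
Qed.

Lemma d_mps1 t : derivable_pt_lim (fun t => - ps1 t) t ((t^2 - 1) * phi t).
Proof.
  unfold ps1. apply is_derive_Reals. unfold phi. auto_derive; auto.
  rewrite fix_exp. field. pose proof sqrt2PI_ge1; lra.
Qed.

Lemma d_ps02 t : derivable_pt_lim (fun t => ps0 t - ps2 t) t ((t^3 - 3 * t) * phi t).
Proof.
  unfold ps0, ps2. apply is_derive_Reals. unfold phi. auto_derive; auto.
  rewrite fix_exp. field. pose proof sqrt2PI_ge1; lra.
Qed.

Lemma cont_shift f a : cont f -> cont (fun mu => f (mu - a)).
Proof.
  intros H x. apply (continuity_pt_comp (fun mu => mu - a) f). reg. apply H.
Qed.

Lemma cont_ps0 : cont ps0. Proof. apply cont_phi. Qed.
Lemma cont_ps1 : cont ps1.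
Proof. unfold ps1. apply cont_mult. intros x; reg. apply cont_phi. Qed.
Lemma cont_ps2 : cont ps2.
Proof. unfold ps2. apply cont_mult. intros x; reg. apply cont_phi. Qed.

Lemma ps_bound (ps : R -> R) : (ps = ps0 \/ ps = ps1 \/ ps = ps2) ->
  forall t, Rabs (ps t) <= 16^4 * / (1 + t^2).
Proof.
  intros Hps t. destruct (pow3_bound t) as [B0 [B1 [B2 _]]].
  replace (16^4 * / (1 + t^2)) with (1 * 16^4 * / (1 + t^2)) by ring.
  destruct Hps as [ -> | [ -> | -> ] ]; unfold ps0, ps1, ps2.
  - replace (phi t) with (1 * phi t) by ring. apply poly_phi_bound. lra. rewrite Rabs_R1; lra.
  - apply poly_phi_bound. lra. lra.
  - apply poly_phi_bound. lra. rewrite Rabs_right by (pose proof (pow2_ge_0 t); lra). lra.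
Qed.

Definition Gprop (g : R -> R) (Lam G0 : R) : Prop :=
  cont g /\ (forall u, 0 < g u) /\ (forall u, g u <= G0) /\
  (forall u v, g u <= g v * exp (Lam * Rabs (u - v))) /\ 0 < Lam.

Definition FF (ps g : R -> R) (c x mu : R) := ps (mu - x) * g (mu - c).
Definition JJ (ps g : R -> R) (c x : R) := Integral (FF ps g c x).

Lemma II_FF ps g Lam G0 c x : Gprop g Lam G0 -> (ps = ps0 \/ ps = ps1 \/ ps = ps2) ->
  II (FF ps g c x) (JJ ps g c x).
Proof.
  intros [Hc [Hp [Hb _]]] Hps.
  assert (Hcont : cont (FF ps g c x)).
  { unfold FF. apply cont_mult; apply cont_shift; auto.
    destruct Hps as [ -> | [ -> | -> ] ]; auto using cont_ps0, cont_ps1, cont_ps2. }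
  assert (HG0 : 0 <= G0) by (specialize (Hb 0); specialize (Hp 0); lra).
  destruct (II_dom (FF ps g c x) (G0 * 16^4) x) as [l [Hl _]]. exact Hcont.
  { apply Rmult_le_pos; lra. }
  { intros mu. unfold FF. rewrite Rabs_mult, (Rabs_right (g (mu - c))) by (apply Rle_ge; left; apply Hp).
    pose proof (ps_bound ps Hps (mu - x)). pose proof (Rabs_pos (ps (mu - x))).
    specialize (Hb (mu - c)). specialize (Hp (mu - c)). rewrite Dm0.
    assert (0 < / (1 + (mu - x)^2)) by (apply Rinv_0_lt_compat; pose proof (pow2_ge_0 (mu - x)); lra).
    apply Rle_trans with (16 ^ 4 * / (1 + (mu - x) ^ 2) * G0). apply Rmult_le_compat; lra.
    lra. }
  unfold JJ. rewrite (Integral_II _ l); auto.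
Qed.

Lemma J_deriv_gen (ps dps ddps : R -> R) Kp g Lam G0 c x (F1 : R -> R -> R) I1 :
  Gprop g Lam G0 -> (forall y, II (FF ps g c y) (JJ ps g c y)) -> II (F1 x) I1 ->
  (forall mu, F1 x mu = - dps (mu - x) * g (mu - c)) ->
  (forall s, derivable_pt_lim ps s (dps s)) -> (forall s, derivable_pt_lim dps s (ddps s)) ->
  (forall s, Rabs (ddps s) <= Kp * / (1 + s^2)) ->
  derivable_pt_lim (JJ ps g c) x I1.
Proof.
  intros [Hc [Hp [Hb _]]] HF HF1 E Hd1 Hd2 Hdd.
  assert (HG0 : 0 <= G0) by (specialize (Hb 0); specialize (Hp 0); lra).
  assert (HK : 0 <= Kp).
  { specialize (Hdd 0). pose proof (Rabs_pos (ddps 0)).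
    assert (0 < / (1 + 0^2)) by (apply Rinv_0_lt_compat; simpl; lra). nra. }
  apply (II_deriv (fun y => FF ps g c y) F1 (JJ ps g c) (fun _ => I1) (G0 * (3 * Kp)) x); auto.
  { apply Rmult_le_pos; lra. }
  intros h mu hh. rewrite E. unfold FF.
  replace (mu - (x + h)) with ((mu - x) - h) by ring.
  replace (ps (mu - x - h) * g (mu - c) - ps (mu - x) * g (mu - c) - h * (- dps (mu - x) * g (mu - c)))
    with (g (mu - c) * (ps (mu - x - h) - ps (mu - x) + h * dps (mu - x))) by ring.
  rewrite Rabs_mult, (Rabs_right (g (mu - c))) by (apply Rle_ge; left; apply Hp).
  pose proof (taylor2 ps dps ddps Kp Hd1 Hd2 Hdd (mu - x) h hh) as T.
  rewrite Dm0. specialize (Hb (mu - c)). specialize (Hp (mu - c)).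
  pose proof (Rabs_pos (ps (mu - x - h) - ps (mu - x) + h * dps (mu - x))).
  assert (0 <= 3 * Kp * h ^ 2 * / (1 + (mu - x) ^ 2)) by lra.
  apply Rle_trans with (G0 * (3 * Kp * h ^ 2 * / (1 + (mu - x) ^ 2))).
  apply Rmult_le_compat; lra. right; ring.
Qed.

Lemma J0_deriv g Lam G0 c x : Gprop g Lam G0 ->
  derivable_pt_lim (JJ ps0 g c) x (JJ ps1 g c x).
Proof.
  intros HG.
  apply (J_deriv_gen ps0 (fun t => - ps1 t) (fun t => (t^2 - 1) * phi t) (2 * 16^4) g Lam G0 c x
           (FF ps1 g c)); auto.
  - intros y. apply (II_FF _ _ Lam G0); auto.
  - apply (II_FF _ _ Lam G0); auto.
  - intros mu. unfold FF. ring.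
  - apply d_ps0.
  - apply d_mps1.
  - intros s. apply poly_phi_bound. lra. apply pow3_bound.
Qed.

Lemma J1_deriv g Lam G0 c x : Gprop g Lam G0 ->
  derivable_pt_lim (JJ ps1 g c) x (JJ ps2 g c x - JJ ps0 g c x).
Proof.
  intros HG.
  apply (J_deriv_gen ps1 (fun t => ps0 t - ps2 t) (fun t => (t^3 - 3 * t) * phi t) (4 * 16^4) g Lam G0 c x
           (fun x mu => FF ps2 g c x mu + (-1) * FF ps0 g c x mu)); auto.
  - intros y. apply (II_FF _ _ Lam G0); auto.
  - replace (JJ ps2 g c x - JJ ps0 g c x) with (JJ ps2 g c x + (-1) * JJ ps0 g c x) by ring.
    apply II_plus. apply (II_FF _ _ Lam G0); auto. apply II_scal. apply (II_FF _ _ Lam G0); auto.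
  - intros mu. unfold FF. ring.
  - apply d_ps1.
  - apply d_ps02.
  - intros s. apply poly_phi_bound. lra. apply pow3_bound.
Qed.

Lemma g_low g Lam G0 u v : Gprop g Lam G0 -> g v * exp (- (Lam * Rabs (u - v))) <= g u.
Proof.
  intros [_ [Hp [_ [Hl _]]]]. specialize (Hl v u). rewrite <- Rabs_Ropp in Hl.
  replace (- (v - u)) with (u - v) in Hl by ring.
  pose proof (exp_pos (Lam * Rabs (u - v))). pose proof (exp_pos (- (Lam * Rabs (u - v)))).
  assert (E : exp (Lam * Rabs (u - v)) * exp (- (Lam * Rabs (u - v))) = 1)
    by (rewrite <- exp_plus; replace (Lam * Rabs (u - v) + - (Lam * Rabs (u - v))) with 0 by ring; apply exp_0).
  apply Rmult_le_compat_r with (r := exp (- (Lam * Rabs (u - v)))) in Hl. 2: lra.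
  rewrite Rmult_assoc, E in Hl. lra.
Qed.

Lemma phi_ge1 t : t^2 <= 1 -> phi 1 <= phi t.
Proof.
  intros H. unfold phi. unfold Rdiv. apply Rmult_le_compat_r.
  left. apply Rinv_0_lt_compat. pose proof sqrt2PI_ge1; lra.
  apply exp_mono. simpl. lra.
Qed.

Definition B0 Lam := 2 * phi 1 * exp (- Lam).

Lemma J0_lower g Lam G0 c x : Gprop g Lam G0 -> g (x - c) * B0 Lam <= JJ ps0 g c x.
Proof.
  intros HG. pose proof (II_FF ps0 g Lam G0 c x HG ltac:(auto)) as HI.
  destruct HG as [Hc [Hp [Hb [Hl HL]]]].
  eapply Rle_trans. 2: apply (II_lower _ _ (x - 1) (x + 1) HI).
  3: lra.
  2: { intros mu. unfold FF, ps0. pose proof (phi_pos (mu - x)). pose proof (Hp (mu - c)). nra. }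
  assert (E : RInt (fun _ => g (x - c) * phi 1 * exp (- Lam)) (x - 1) (x + 1) = g (x - c) * B0 Lam).
  { rewrite RI_const. unfold B0. change (@eq R ((x + 1 - (x - 1)) * (g (x - c) * phi 1 * exp (- Lam))) (g (x - c) * (2 * phi 1 * exp (- Lam)))). ring. }
  rewrite <- E.
  apply RInt_le. lra.
  apply exRI, cont_const. apply exRI, HI.
  intros mu Hmu. unfold FF, ps0.
  assert (P1 : phi 1 <= phi (mu - x)) by (apply phi_ge1; nra).
  assert (P2 : g (x - c) * exp (- Lam) <= g (mu - c)).
  { eapply Rle_trans. 2: apply (g_low g Lam G0 (mu - c) (x - c)); repeat split; auto.
    apply Rmult_le_compat_l. left; auto. apply exp_mono.
    replace (mu - c - (x - c)) with (mu - x) by ring.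
    assert (Rabs (mu - x) <= 1) by (apply Rabs_le; lra). nra. }
  pose proof (phi_pos 1). pose proof (exp_pos (- Lam)). pose proof (Hp (x - c)).
  apply Rle_trans with (phi (mu - x) * (g (x - c) * exp (- Lam))).
  replace (g (x - c) * phi 1 * exp (- Lam)) with (phi 1 * (g (x - c) * exp (- Lam))) by ring.
  apply Rmult_le_compat_r; nra.
  apply Rmult_le_compat_l. pose proof (phi_pos (mu - x)); lra. auto.
Qed.

Lemma tail_bound Lam t : t^2 * phi t * exp (Lam * Rabs t) <= exp (Lam^2) * 16^4 * / (1 + t^2).
Proof.
  pose proof (phi_le t). pose proof (phi_pos t). pose proof (exp_quarter t).
  pose proof (pow2_ge_0 t). destruct (pow3_bound t) as [_ [_ [B2 _]]].
  assert (E1 : phi t * exp (Lam * Rabs t) <= exp (Lam^2) * exp (- (t^2)/4)).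
  { eapply Rle_trans. apply Rmult_le_compat_r. left; apply exp_pos. apply phi_le.
    rewrite <- !exp_plus. apply exp_mono.
    pose proof (pow2_ge_0 (Rabs t / 2 - Lam)). rewrite <- (pow2_abs t) at 1 2.
    replace (t^2) with (Rabs t ^ 2) by apply pow2_abs. nra. }
  assert (P : 0 < 1 + t^2) by lra.
  apply Rmult_le_reg_r with (1 + t^2). auto.
  replace (exp (Lam ^ 2) * 16 ^ 4 * / (1 + t ^ 2) * (1 + t ^ 2)) with (exp (Lam^2) * 16^4) by (field; lra).
  assert (Q : t^2 * (1 + t^2) <= (1 + t^2)^4).
  { replace ((1+t^2)^4) with ((1+t^2)^3 * (1 + t^2)) by ring. apply Rmult_le_compat_r; lra. }
  pose proof (exp_pos (Lam^2)). pose proof (exp_pos (- (t^2)/4)). pose proof (exp_pos (Lam * Rabs t)).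
  replace (t ^ 2 * phi t * exp (Lam * Rabs t) * (1 + t ^ 2)) with ((t^2 * (1 + t^2)) * (phi t * exp (Lam * Rabs t))) by ring.
  apply Rle_trans with ((1 + t^2)^4 * (exp (Lam^2) * exp (- (t^2)/4))).
  apply Rmult_le_compat; try nra.
  replace ((1 + t ^ 2) ^ 4 * (exp (Lam ^ 2) * exp (- t ^ 2 / 4))) with (exp (Lam^2) * ((1 + t ^ 2) ^ 4 * exp (- t ^ 2 / 4))) by ring.
  apply Rmult_le_compat_l; lra.
Qed.

Definition KA Lam := exp (Lam^2) * 16^4 * PI.

Lemma J2_upper g Lam G0 c x : Gprop g Lam G0 -> JJ ps2 g c x <= g (x - c) * KA Lam.
Proof.
  intros HG. pose proof (II_FF ps2 g Lam G0 c x HG ltac:(auto)) as HI.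
  destruct HG as [Hc [Hp [Hb [Hl HL]]]].
  unfold KA. replace (g (x - c) * (exp (Lam ^ 2) * 16 ^ 4 * PI)) with ((g (x - c) * (exp (Lam ^ 2) * 16 ^ 4)) * PI) by ring.
  apply (II_le_dom _ _ _ x HI).
  { pose proof (Hp (x - c)). pose proof (exp_pos (Lam^2)). apply Rmult_le_pos; lra. }
  intros mu. unfold FF, ps2. rewrite Dm0.
  pose proof (tail_bound Lam (mu - x)).
  specialize (Hl (mu - c) (x - c)). replace (mu - c - (x - c)) with (mu - x) in Hl by ring.
  pose proof (pow2_ge_0 (mu - x)). pose proof (phi_pos (mu - x)). pose proof (Hp (x - c)).
  apply Rle_trans with ((mu - x) ^ 2 * phi (mu - x) * (g (x - c) * exp (Lam * Rabs (mu - x)))).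
  apply Rmult_le_compat_l; nra.
  replace ((mu - x) ^ 2 * phi (mu - x) * (g (x - c) * exp (Lam * Rabs (mu - x)))) with
     (g (x - c) * ((mu - x) ^ 2 * phi (mu - x) * exp (Lam * Rabs (mu - x)))) by ring.
  replace (g (x - c) * (exp (Lam ^ 2) * 16 ^ 4) * / (1 + (mu - x) ^ 2)) with
    (g (x - c) * (exp (Lam ^ 2) * 16 ^ 4 * / (1 + (mu - x) ^ 2))) by ring.
  apply Rmult_le_compat_l; lra.
Qed.

Lemma B0_pos Lam : 0 < B0 Lam.
Proof. unfold B0. pose proof (phi_pos 1). pose proof (exp_pos (- Lam)). nra. Qed.

Lemma J0_pos g Lam G0 c x : Gprop g Lam G0 -> 0 < JJ ps0 g c x.
Proof.
  intros HG. pose proof (J0_lower g Lam G0 c x HG). pose proof (B0_pos Lam).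
  destruct HG as [_ [Hp _]]. pose proof (Hp (x - c)). nra.
Qed.

Lemma CS g Lam G0 c x : Gprop g Lam G0 -> (JJ ps1 g c x)^2 <= JJ ps0 g c x * JJ ps2 g c x.
Proof.
  intros HG. pose proof (J0_pos g Lam G0 c x HG) as H0.
  set (J0 := JJ ps0 g c x) in *. set (J1 := JJ ps1 g c x). set (J2 := JJ ps2 g c x).
  set (s := J1 / J0).
  assert (HI : II (fun mu => FF ps2 g c x mu + ((-2 * s) * FF ps1 g c x mu + (s^2) * FF ps0 g c x mu))
                  (J2 + ((-2 * s) * J1 + s^2 * J0))).
  { apply II_plus. apply (II_FF _ _ Lam G0); auto. apply II_plus; apply II_scal; apply (II_FF _ _ Lam G0); auto. }
  assert (N : 0 <= J2 + ((-2 * s) * J1 + s^2 * J0)).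
  { apply (II_ge _ _ _ HI). exists 0. intros a b Ha Hb. apply RI_ge0. lra. apply HI.
    intros mu. unfold FF, ps0, ps1, ps2. destruct HG as [_ [Hp _]].
    pose proof (Hp (mu - c)). pose proof (phi_pos (mu - x)).
    replace ((mu - x) ^ 2 * phi (mu - x) * g (mu - c) +
      (-2 * s * ((mu - x) * phi (mu - x) * g (mu - c)) + s ^ 2 * (phi (mu - x) * g (mu - c))))
      with ((mu - x - s)^2 * (phi (mu - x) * g (mu - c))) by ring.
    apply Rmult_le_pos. apply pow2_ge_0. nra. }
  unfold s in N.
  replace (J2 + (-2 * (J1 / J0) * J1 + (J1 / J0) ^ 2 * J0)) with ((J0 * J2 - J1^2) / J0) in N by (field; lra).
  assert (0 <= J0 * J2 - J1^2); [|lra].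
  apply Rmult_le_reg_r with (/ J0). apply Rinv_0_lt_compat; lra. rewrite Rmult_0_l. auto.
Qed.

Lemma x2exp x : x^2 * exp (- (x^2) / 4) <= 4.
Proof.
  pose proof (exp_ineq1_le (x^2/4)). pose proof (pow2_ge_0 x).
  assert (E : exp (- (x^2)/4) * exp (x^2/4) = 1)
    by (rewrite <- exp_plus; replace (- (x^2)/4 + x^2/4) with 0 by field; apply exp_0).
  pose proof (exp_pos (- (x^2)/4)).
  assert (Hx : x^2 <= 4 * exp (x^2/4)) by lra.
  apply Rmult_le_compat_r with (r := exp (- (x^2)/4)) in Hx. 2: lra.
  rewrite Rmult_assoc, (Rmult_comm (exp (x^2/4))), E in Hx. lra.
Qed.

Lemma pbound A B x L Lam c GB : 0 <= A -> A <= exp (- (x^2)/2) -> 0 < GB ->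
  GB * exp (- (L + Lam * Rabs x + Lam * Rabs c)) <= B -> 0 <= L -> 0 < Lam ->
  A * x^2 / (A + B) <= 4 / GB + 16 * Lam^2 + 8 * Lam * Rabs c + 8 * L.
Proof.
  intros HA HAe HGB HB HL HLam.
  set (Z := L + Lam * Rabs x + Lam * Rabs c) in *.
  pose proof (exp_pos (- Z)) as HeZ. pose proof (Rabs_pos x). pose proof (Rabs_pos c).
  assert (HGZ : 0 < GB * exp (- Z)) by (apply Rmult_lt_0_compat; lra).
  assert (HBp : 0 < B) by lra.
  pose proof (pow2_ge_0 x).
  assert (P0 : 0 <= 4 / GB) by (apply Rlt_le, Rdiv_lt_0_compat; lra).
  assert (Hle1 : A * x^2 / (A + B) <= x^2).
  { apply Rmult_le_reg_r with (A + B). lra. unfold Rdiv. rewrite Rmult_assoc, Rinv_l by lra. nra. }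
  destruct (Rle_lt_dec Z (x^2/4)) as [Hc|Hc].
  -
    assert (Hle2 : A * x^2 / (A + B) <= A * x^2 / B).
    { unfold Rdiv. apply Rmult_le_compat_l. nra. apply Rinv_le_contravar; lra. }
    assert (Hle3 : A * x^2 / B <= exp (- (x^2)/2) * x^2 / (GB * exp (- Z))).
    { unfold Rdiv. apply Rmult_le_compat. nra. left; apply Rinv_0_lt_compat; lra.
      apply Rmult_le_compat_r; lra. apply Rinv_le_contravar; nra. }
    assert (Hle4 : exp (- (x^2)/2) * x^2 / (GB * exp (- Z)) = x^2 * exp (- (x^2)/2 + Z) / GB).
    { rewrite exp_plus. replace (exp Z) with (/ exp (- Z)). field. split; lra.
      rewrite <- exp_Ropp. rewrite Ropp_involutive. auto. }
    assert (Hle5 : exp (- (x^2)/2 + Z) <= exp (- (x^2)/4)) by (apply exp_mono; lra).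
    assert (Hle6 : x^2 * exp (- (x^2)/2 + Z) / GB <= 4 / GB).
    { unfold Rdiv. apply Rmult_le_compat_r. left; apply Rinv_0_lt_compat; lra.
      pose proof (x2exp x). pose proof (exp_pos (- (x^2)/2 + Z)).
      apply Rle_trans with (x^2 * exp (- (x^2)/4)); auto. apply Rmult_le_compat_l; lra. }
    assert (0 <= 16 * Lam^2 + 8 * Lam * Rabs c + 8 * L) by nra.
    lra.
  - assert (x^2 <= 16 * Lam^2 + 8 * Lam * Rabs c + 8 * L).
    { unfold Z in Hc. assert (x^2 = Rabs x ^ 2) by (symmetry; apply pow2_abs).
      pose proof (pow2_ge_0 (Rabs x - 4 * Lam)). nra. }
    lra.
Qed.

Lemma alg_bound A w J0 J1 J2 x K2 : 0 <= A -> 0 < w -> 0 < J0 -> J1^2 <= J0 * J2 ->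
  J2 <= K2 * J0 ->
  let m := A + w * J0 in
  0 <= (m * (A * x^2 + w * J2) - (w * J1 - A * x)^2) / m^2 /\
  (m * (A * x^2 + w * J2) - (w * J1 - A * x)^2) / m^2 <= 2 * (A * x^2 / m) + 3 * K2.
Proof.
  intros HA Hw H0 HCS HK m.
  assert (HwJ : 0 < w * J0) by (apply Rmult_lt_0_compat; lra).
  assert (Hm : 0 < m) by (unfold m; lra).
  set (p := A / m). set (q := w * J0 / m). set (M1 := J1 / J0). set (M2 := J2 / J0).
  assert (Hp : 0 <= p) by (unfold p; apply Rmult_le_pos; [lra| left; apply Rinv_0_lt_compat; lra]).
  assert (Hq : 0 <= q) by (unfold q; apply Rmult_le_pos; [lra| left; apply Rinv_0_lt_compat; lra]).
  assert (Hpq : p + q = 1) by (unfold p, q; unfold m in *; field; lra).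
  assert (HM : M1^2 <= M2).
  { unfold M1, M2. replace ((J1 / J0)^2) with (J1^2 / J0 / J0) by (field; lra).
    unfold Rdiv. apply Rmult_le_compat_r. left; apply Rinv_0_lt_compat; lra.
    apply Rmult_le_reg_r with J0. lra. rewrite Rmult_assoc, Rinv_l by lra. lra. }
  assert (HM2 : M2 <= K2).
  { unfold M2. apply Rmult_le_reg_r with J0. lra. unfold Rdiv. rewrite Rmult_assoc, Rinv_l by lra. lra. }
  assert (E : (m * (A * x^2 + w * J2) - (w * J1 - A * x)^2) / m^2 = p * q * (x + M1)^2 + q * (M2 - M1^2)).
  { unfold p, q, M1, M2; unfold m in *. field. split; lra. }
  assert (Ep : A * x^2 / m = p * x^2) by (unfold p; unfold Rdiv; ring).
  rewrite E, Ep. pose proof (pow2_ge_0 (x + M1)). pose proof (pow2_ge_0 (x - M1)).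
  pose proof (pow2_ge_0 M1). pose proof (pow2_ge_0 x).
  split.
  - apply Rplus_le_le_0_compat. apply Rmult_le_pos; nra. apply Rmult_le_pos; lra.
  - assert (pq1 : p * q <= p) by nra. assert (pq2 : p * q <= 1) by nra.
    assert ((x + M1)^2 <= 2 * x^2 + 2 * M1^2) by nra.
    assert (p * q * (x + M1)^2 <= p * q * (2 * x^2 + 2 * M1^2)) by (apply Rmult_le_compat_l; nra).
    assert (p * q * (2 * x^2) <= p * (2 * x^2)) by (apply Rmult_le_compat_r; nra).
    assert (p * q * (2 * M1^2) <= 2 * M1^2) by nra.
    assert (q * (M2 - M1^2) <= M2) by nra.
    nra.
Qed.

Lemma gconv_J g c : gconv g c = JJ ps0 g c.
Proof.
  apply functional_extensionality. intros y. unfold gconv, JJ, FF, ps0.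
  f_equal. apply functional_extensionality. intros mu. rewrite phi_sym. reflexivity.
Qed.

Lemma deriv_eq f x d : derivable_pt_lim f x d -> deriv f x = d.
Proof.
  intros H. unfold deriv. apply (uniqueness_limite f x). 2: exact H.
  apply epsilon_spec. exists d. exact H.
Qed.

Lemma L_nonneg w : 0 < w -> w <= 1 -> 0 <= ln (1 / w).
Proof.
  intros H0 H1. assert (1 <= 1 / w).
  { apply Rmult_le_reg_r with w. auto. unfold Rdiv. rewrite Rmult_assoc, Rinv_l by lra. lra. }
  destruct (Req_dec (1 / w) 1) as [e|e]. rewrite e, ln_1. lra.
  rewrite <- ln_1. left. apply ln_increasing; lra.
Qed.

Lemma w_exp w : 0 < w -> w = exp (- ln (1 / w)).
Proof.
  intros H. unfold Rdiv. rewrite Rmult_1_l, ln_Rinv by auto. rewrite Ropp_involutive, exp_ln; auto.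
Qed.

Lemma main_G g Lam G0 : Gprop g Lam G0 ->
  exists C, 0 < C /\
    forall x w c, 0 < w -> w <= 1 ->
      exists d, derivable_pt_lim (zeta g w c) x d /\
        Rabs d <= C * (1 + Rabs c + ln (1 / w)).
Proof.
  intros HG. pose proof HG as [Hc [Hp [Hb [Hl HL]]]].
  set (GB := g 0 * B0 Lam).
  assert (HGB : 0 < GB) by (unfold GB; pose proof (B0_pos Lam); pose proof (Hp 0); nra).
  set (K2 := KA Lam / B0 Lam).
  assert (HK2 : 0 <= K2).
  { unfold K2, KA. pose proof (B0_pos Lam). pose proof (exp_pos (Lam^2)). pose proof PI_RGT_0.
    apply Rlt_le, Rdiv_lt_0_compat; auto. apply Rmult_lt_0_compat; nra. }
  set (C := 8 / GB + 32 * Lam^2 + 3 * K2 + 16 * Lam + 16).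
  assert (P8 : 0 < 8 / GB) by (apply Rdiv_lt_0_compat; lra).
  exists C. split. { unfold C. pose proof (pow2_ge_0 Lam). lra. }
  intros x w c Hw0 Hw1.
  set (J0 := JJ ps0 g c). set (J1 := JJ ps1 g c). set (J2 := JJ ps2 g c).
  set (m := fun y => (1 - w) * phi y + w * J0 y).
  set (mp := fun y => - (1 - w) * y * phi y + w * J1 y).
  set (mpp := fun y => (1 - w) * (y^2 - 1) * phi y + w * (J2 y - J0 y)).
  assert (Hm : marg g w c = m).
  { unfold marg, m. rewrite gconv_J. reflexivity. }
  assert (Hmpos : forall y, 0 < m y).
  { intros y. unfold m. pose proof (phi_pos y). pose proof (J0_pos g Lam G0 c y HG).
    assert (0 < w * J0 y) by (apply Rmult_lt_0_compat; auto). assert (0 <= (1 - w) * phi y) by nra. lra. }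
  assert (Dm : forall y, derivable_pt_lim m y (mp y)).
  { intros y. unfold m, mp.
    replace (- (1 - w) * y * phi y + w * J1 y) with ((1 - w) * (- y * phi y) + w * J1 y) by ring.
    apply (derivable_pt_lim_plus (fun y => (1 - w) * phi y) (fun y => w * J0 y)).
    apply derivable_pt_lim_scal. apply phi_deriv.
    apply derivable_pt_lim_scal. apply (J0_deriv g Lam G0 c y HG). }
  assert (Dmp : forall y, derivable_pt_lim mp y (mpp y)).
  { intros y. unfold mp, mpp.
    replace ((1 - w) * (y ^ 2 - 1) * phi y + w * (J2 y - J0 y)) with
      ((- (1 - w)) * (1 * phi y + y * (- y * phi y)) + w * (J2 y - J0 y)) by ring.
    apply (derivable_pt_lim_plus (fun y => - (1 - w) * y * phi y) (fun y => w * J1 y)).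
    - apply derivable_pt_lim_ext with (f := fun y => - (1 - w) * (y * phi y)).
      intros; ring.
      apply derivable_pt_lim_scal.
      apply (derivable_pt_lim_mult (fun y => y) phi). apply derivable_pt_lim_id. apply phi_deriv.
    - apply derivable_pt_lim_scal. apply (J1_deriv g Lam G0 c y HG). }
  assert (Hd : forall y, deriv (fun y => ln (marg g w c y)) y = mp y / m y).
  { intros y. apply deriv_eq. rewrite Hm.
    replace (mp y / m y) with (/ m y * mp y) by (field; specialize (Hmpos y); lra).
    apply (derivable_pt_lim_comp m ln). apply Dm. apply derivable_pt_lim_ln. auto. }
  assert (Hz : zeta g w c = fun y => y + mp y / m y).
  { apply functional_extensionality. intros y. unfold zeta. rewrite Hd. reflexivity. }
  rewrite Hz.
  exists (1 + (mpp x * m x - mp x * mp x) / (m x)²).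
  split.
  { apply (derivable_pt_lim_plus (fun y => y) (fun y => mp y / m y)). apply derivable_pt_lim_id.
    apply (derivable_pt_lim_div mp m). auto. auto. specialize (Hmpos x); lra. }
  set (A := (1 - w) * phi x).
  assert (HA : 0 <= A) by (unfold A; pose proof (phi_pos x); nra).
  assert (HmA : m x = A + w * J0 x) by reflexivity.
  assert (E : 1 + (mpp x * m x - mp x * mp x) / (m x)² =
     (m x * (A * x^2 + w * J2 x) - (w * J1 x - A * x)^2) / (m x)^2).
  { specialize (Hmpos x). rewrite HmA in *. unfold Rsqr. unfold mpp, mp, A in *. field. lra. }
  rewrite E. rewrite HmA.
  pose proof (J0_pos g Lam G0 c x HG) as HJ0.
  pose proof (CS g Lam G0 c x HG) as HCS.
  pose proof (J0_lower g Lam G0 c x HG) as HJl. pose proof (J2_upper g Lam G0 c x HG) as HJu.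
  assert (HJ2 : J2 x <= K2 * J0 x).
  { unfold K2. pose proof (B0_pos Lam). pose proof (Hp (x - c)).
    apply Rle_trans with (g (x - c) * KA Lam). apply HJu.
    apply Rle_trans with (KA Lam / B0 Lam * (g (x - c) * B0 Lam)).
    right. field. lra. apply Rmult_le_compat_l. unfold KA. apply Rlt_le, Rdiv_lt_0_compat; auto.
    pose proof (exp_pos (Lam^2)). pose proof PI_RGT_0. apply Rmult_lt_0_compat; nra. apply HJl. }
  destruct (alg_bound A w (J0 x) (J1 x) (J2 x) x K2 HA Hw0 HJ0 HCS HJ2) as [Lo Up].
  set (L := ln (1 / w)).
  assert (HLn : 0 <= L) by (apply L_nonneg; auto).
  assert (HP : A * x^2 / (A + w * J0 x) <= 4 / GB + 16 * Lam^2 + 8 * Lam * Rabs c + 8 * L).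
  { apply pbound; auto.
    - unfold A. pose proof (phi_le x). pose proof (phi_pos x). nra.
    - pose proof (g_low g Lam G0 (x - c) 0 HG) as Hgl. rewrite Rminus_0_r in Hgl.
      pose proof (B0_pos Lam).
      assert (Ew : w * exp (- (Lam * Rabs (x - c))) >= exp (- (L + Lam * Rabs x + Lam * Rabs c))).
      { rewrite (w_exp w Hw0) at 1. fold L. rewrite <- exp_plus. apply Rle_ge, exp_mono.
        pose proof (Rabs_triang x (- c)). rewrite Rabs_Ropp in H0. unfold Rminus. nra. }
      pose proof (exp_pos (- (L + Lam * Rabs x + Lam * Rabs c))).
      pose proof (exp_pos (- (Lam * Rabs (x - c)))).
      apply Rle_trans with (w * (g (x - c) * B0 Lam)).
      2: apply Rmult_le_compat_l; [lra | exact HJl].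
      unfold GB.
      apply Rle_trans with (g 0 * B0 Lam * (w * exp (- (Lam * Rabs (x - c))))).
      apply Rmult_le_compat_l. apply Rlt_le, HGB. lra.
      replace (w * (g (x - c) * B0 Lam)) with (B0 Lam * (w * g (x - c))) by ring.
      replace (g 0 * B0 Lam * (w * exp (- (Lam * Rabs (x - c))))) with (B0 Lam * (w * (g 0 * exp (- (Lam * Rabs (x - c)))))) by ring.
      apply Rmult_le_compat_l. lra. apply Rmult_le_compat_l. lra. auto. }
  rewrite Rabs_right by lra.
  eapply Rle_trans. apply Up.
  unfold C. pose proof (Rabs_pos c). pose proof (pow2_ge_0 Lam).
  assert (8 / GB + 32 * Lam ^ 2 + 3 * K2 <= (8 / GB + 32 * Lam ^ 2 + 3 * K2) * (1 + Rabs c + L)).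
  { assert (0 <= 8 / GB + 32 * Lam ^ 2 + 3 * K2) by lra. nra. }
  assert (16 * Lam * Rabs c <= 16 * Lam * (1 + Rabs c + L)) by nra.
  assert (16 * L <= 16 * (1 + Rabs c + L)) by nra.
  replace (4 / GB) with (8 / GB / 2) in HP by (field; lra).
  nra.
Qed.

Lemma case1 g Lam Lam' : symmetric_unimodal g -> 0 < Lam -> log_regular g Lam Lam' -> Gprop g Lam (g 0).
Proof.
  intros [Hs Hu] HL [Hp [l' [Hd [Hb _]]]].
  assert (Eg : forall u, g u = exp (ln (g u))) by (intros; rewrite exp_ln; auto).
  split; [|split; [auto|split; [|split; auto]]].
  - intros u.
    assert (D : derivable_pt_lim (fun v => exp (ln (g v))) u (exp (ln (g u)) * l' u)).
    { apply (derivable_pt_lim_comp (fun v => ln (g v)) exp). apply Hd. apply derivable_pt_lim_exp. }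
    assert (Ef : (fun v => exp (ln (g v))) = g) by (apply functional_extensionality; intros; rewrite exp_ln; auto).
    rewrite Ef in D. apply derivable_continuous_pt. exists (exp (ln (g u)) * l' u). exact D.
  - intros u. destruct (Rle_lt_dec 0 u). apply Hu; lra.
    rewrite <- Hs. apply Hu; lra.
  - intros u v. destruct (MVT_abs (fun v => ln (g v)) l' Hd v u) as [xi [_ E]].
    rewrite (Eg u), (Eg v). rewrite <- exp_plus. apply exp_mono.
    assert (ln (g u) - ln (g v) <= Lam * Rabs (u - v)); [|lra].
    rewrite E. eapply Rle_trans. apply Rle_abs. rewrite Rabs_mult.
    apply Rmult_le_compat_r. apply Rabs_pos. auto.
Qed.

Lemma case2 Lam : 0 < Lam -> Gprop (laplace Lam) Lam (Lam / 2).
Proof.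
  intros HL. unfold laplace. split; [|split; [|split; [|split; auto]]].
  - intros u. apply continuity_pt_mult. apply continuity_pt_const; intros ? ?; auto.
    apply (continuity_pt_comp (fun u => - Lam * Rabs u) exp).
    apply continuity_pt_mult. apply continuity_pt_const; intros ? ?; auto. apply Rcontinuity_abs.
    apply derivable_continuous_pt. apply derivable_pt_exp.
  - intros u. pose proof (exp_pos (- Lam * Rabs u)). nra.
  - intros u. assert (exp (- Lam * Rabs u) <= 1).
    { rewrite <- exp_0. apply exp_mono. pose proof (Rabs_pos u). nra. }
    nra.
  - intros u v. rewrite Rmult_assoc. apply Rmult_le_compat_l. lra.
    rewrite <- exp_plus. apply exp_mono.
    assert (Rabs v <= Rabs u + Rabs (u - v)).
    { replace v with (u + - (u - v)) at 1 by ring. eapply Rle_trans. apply Rabs_triang. rewrite Rabs_Ropp. lra. }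
    nra.
Qed.

Theorem mainTheorem10 (gamma0 : R -> R) :
  ((is_density gamma0 /\ symmetric_unimodal gamma0 /\
    exists Lam Lam', 0 < Lam /\ 0 < Lam' /\ log_regular gamma0 Lam Lam')
   \/ (exists Lam, 0 < Lam /\ gamma0 = laplace Lam)) ->
  exists C, 0 < C /\
    forall x w c, 0 < w -> w <= 1 ->
      exists d, derivable_pt_lim (zeta gamma0 w c) x d /\
        Rabs d <= C * (1 + Rabs c + ln (1 / w)).
Proof.
  intros [[_ [Hsu [Lam [Lam' [HL [_ Hr]]]]]] | [Lam [HL ->]]].
  - apply (main_G gamma0 Lam (gamma0 0)). apply (case1 _ _ Lam'); auto.
  - apply (main_G _ Lam (Lam / 2)). apply case2; auto.
Qed.
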